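(* Let $n,m\ge 1$, $T\in\mathbb Z_{\ge1}$, $1\le L_D\le T$, $\alpha\in(0,1)$, $\mu\ge 1$, $\bar B\ge0$, $\bar\epsilon\ge0$, and suppose the dwell time satisfies $T>-\ln\mu/\ln\alpha$. Set $\hat\alpha:=\alpha\,\mu^{1/T}$, so that $\hat\alpha\in[\alpha,1)$. For $i\in\mathbb Z_{\ge0}$ let $k_i:=iT$, $\mathcal T_i:=\{k_i,\dots,k_i+T-1\}$ and $\mathcal T_i^D:=\{k_{i+1}-L_D,\dots,k_{i+1}-1\}\subseteq\mathcal T_i$. Let $P_{\min},P_{\max}$ be symmetric positive definite $n\times n$ matrices, $p_{\min}:=\lambda_{\min}(P_{\min})$, $p_{\max}:=\lambda_{\max}(P_{\max})$, and let $(P_i)_{i\ge0}$ be symmetric positive definite matrices with $P_{\min}\preceq P_i\preceq P_{\max}$ and $P_{i+1}\preceq\mu P_i$ for all $i$. Let $\eta(k)\in\mathbb R^n$, $k\in\mathbb Z_{\ge0}$, be a sequence satisfying $$\eta(k+1)=g(k)+B(k)\,\epsilon(k),\qquad k\ge0,$$ where $g(k)\in\mathbb R^n$, $B(k)\in\mathbb R^{n\times m}$ with $\|B(k)\|\le\bar B$, $\epsilon(k)\in\mathbb R^m$ with $\epsilon(k)=0$ for $k\in\mathcal T_i\setminus\mathcal T_i^D$ and $\|\epsilon(k)\|\le\bar\epsilon$ for $k\in\mathcal T_i^D$, and for every $i$ and every $k\in\mathcal T_i$ the one-step decay $$\big\|P_i^{1/2}g(k)\big\|\le\sqrt{\alpha}\,\big\|P_i^{1/2}\eta(k)\big\|$$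 holds. (In the paper's setting, $g(k)=(A(k)+B(k)K_i)\eta(k)+d(k)$ is the closed-loop deviation update under the feedback $\xi=K_i\eta$ and the decay is the robust Lyapunov decrease certified on segment $i$.) Then for all $k\in\mathbb Z_{\ge0}$, $$\|\eta(k)\|\le\sqrt{\tfrac{p_{\max}}{p_{\min}}}\;\hat\alpha^{k/2}\,\|\eta(0)\|+\sqrt{\tfrac{p_{\max}}{p_{\min}}}\;\frac{(\hat\alpha/\alpha)^{T/2}}{1-\sqrt{\hat\alpha}}\;\bar B\,\bar\epsilon .$$
   Context: $\|\cdot\|$ is the Euclidean norm on vectors and the induced spectral norm on matrices; $P^{1/2}$ is the symmetric positive definite square root; $\preceq$ is the Loewner order; $\lambda_{\min},\lambda_{\max}$ denote extremal eigenvalues. *)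

(* Defs.v *)
From HB Require Import structures.
From mathcomp Require Import all_boot all_order all_algebra.
From mathcomp Require Import all_classical all_reals all_analysis.
Set Implicit Arguments. Unset Strict Implicit. Unset Printing Implicit Defensive.
Import Order.TTheory GRing.Theory Num.Theory.
Local Open Scope classical_set_scope.
Local Open Scope ring_scope.

Section Defs.
Variable R : realType.

Definition vnorm (n : nat) (v : 'cV[R]_n) : R :=
  Num.sqrt (\sum_(i < n) v i 0 ^+ 2).

Definition opnorm (n m : nat) (B : 'M[R]_(n, m)) : R :=
  sup [set vnorm (B *m v) | v in [set v : 'cV[R]_m | vnorm v <= 1]].

Definition qform (n : nat) (P : 'M[R]_n) (x : 'cV[R]_n) : R :=
  (x^T *m P *m x) 0 0.

Definition symmetric (n : nat) (P : 'M[R]_n) : Prop := P^T = P.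

Definition spd (n : nat) (P : 'M[R]_n) : Prop :=
  symmetric P /\ forall x : 'cV[R]_n, x != 0 -> 0 < qform P x.

Definition loewner_le (n : nat) (P Q : 'M[R]_n) : Prop :=
  forall x : 'cV[R]_n, qform P x <= qform Q x.

Definition is_spd_sqrt (n : nat) (S P : 'M[R]_n) : Prop :=
  spd S /\ S *m S = P.

Definition lambda_min (n : nat) (P : 'M[R]_n) : R :=
  inf [set a : R | eigenvalue P a].
Definition lambda_max (n : nat) (P : 'M[R]_n) : R :=
  sup [set a : R | eigenvalue P a].

End Defs.

(* Main.v *)
Require Import Defs.
From HB Require Import structures.
From mathcomp Require Import all_boot all_order all_algebra.
From mathcomp Require Import all_classical all_reals all_analysis.
From mathcomp Require Import ring lra.
Set Implicit Arguments. Unset Strict Implicit. Unset Printing Implicit Defensive.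
Import Order.TTheory GRing.Theory Num.Theory.
Import numFieldNormedType.Exports.
Local Open Scope classical_set_scope.
Local Open Scope ring_scope.
Definition bil (R : realType) n (P : 'M[R]_n) (a b : 'rV[R]_n) : R :=
  (a *m P *m b^T) 0 0.
Definition dt (R : realType) n (a b : 'rV[R]_n) : R := (a *m b^T) 0 0.

Lemma bilDl (R : realType) n (P : 'M[R]_n) a b c : bil P (a + b) c = bil P a c + bil P b c.
Proof. by rewrite /bil !mulmxDl mxE. Qed.
Lemma bilDr (R : realType) n (P : 'M[R]_n) a b c : bil P c (a + b) = bil P c a + bil P c b.
Proof. by rewrite /bil linearD /= mulmxDr mxE. Qed.
Lemma bilZl (R : realType) n (P : 'M[R]_n) t a c : bil P (t *: a) c = t * bil P a c.
Proof. by rewrite /bil -!scalemxAl mxE. Qed.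
Lemma bilZr (R : realType) n (P : 'M[R]_n) t a c : bil P c (t *: a) = t * bil P c a.
Proof. by rewrite /bil linearZ /= -scalemxAr mxE. Qed.
Lemma bilC (R : realType) n (P : 'M[R]_n) a b : P^T = P -> bil P a b = bil P b a.
Proof.
move=> sP; rewrite /bil [LHS](_ : _ = (a *m P *m b^T)^T 0 0); last by rewrite [RHS]mxE.
by rewrite !trmx_mul trmxK sP mulmxA.
Qed.
Lemma dtE (R : realType) n (a b : 'rV[R]_n) : dt a b = \sum_i a 0 i * b 0 i.
Proof. by rewrite /dt mxE; apply: eq_bigr => i _; rewrite mxE. Qed.
Lemma dtC (R : realType) n (a b : 'rV[R]_n) : dt a b = dt b a.
Proof. by rewrite !dtE; apply: eq_bigr => i _; rewrite mulrC. Qed.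
Lemma dtDl (R : realType) n (a b c : 'rV[R]_n) : dt (a + b) c = dt a c + dt b c.
Proof. by rewrite /dt mulmxDl mxE. Qed.
Lemma dtZl (R : realType) n t (a c : 'rV[R]_n) : dt (t *: a) c = t * dt a c.
Proof. by rewrite /dt -scalemxAl mxE. Qed.
Lemma dtDr (R : realType) n (a b c : 'rV[R]_n) : dt c (a + b) = dt c a + dt c b.
Proof. by rewrite dtC dtDl !(dtC c). Qed.
Lemma dtZr (R : realType) n t (a c : 'rV[R]_n) : dt c (t *: a) = t * dt c a.
Proof. by rewrite dtC dtZl dtC. Qed.
Lemma dt_ge0 (R : realType) n (a : 'rV[R]_n) : 0 <= dt a a.
Proof. by rewrite dtE sumr_ge0 // => i _; rewrite -expr2 sqr_ge0. Qed.
Lemma dt_eq0 (R : realType) n (a : 'rV[R]_n) : dt a a = 0 -> a = 0.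
Proof.
rewrite dtE => /eqP; rewrite psumr_eq0 => [/allP H|i _]; last by rewrite -expr2 sqr_ge0.
apply/rowP => i; rewrite mxE; have := H i (mem_index_enum i).
by rewrite implyTb mulf_eq0 orbb => /eqP.
Qed.
Lemma bil_row (R : realType) n (P : 'M[R]_n) a b : bil P a b = dt (a *m P) b.
Proof. by []. Qed.
Lemma cont_mul (R : realType) n (f g : 'rV[R]_n -> R) :
  continuous f -> continuous g -> continuous (fun v => f v * g v).
Proof. move=> cf cg x. exact (continuousM (cf x) (cg x)). Qed.

Lemma cont_sum (R : realType) n (I : finType) (F : I -> 'rV[R]_n -> R) :
  (forall i, continuous (F i)) -> continuous (fun v => \sum_i F i v).
Proof.
move=> cF; rewrite unlock; elim: (index_enum I) => [|i s IH] /=.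
  by move=> x; apply: cst_continuous.
move=> x; exact: (continuousD (cF i x) (IH x)).
Qed.

Lemma cont_coord (R : realType) n i : continuous (fun v : 'rV[R]_n => v 0 i).
Proof. exact: coord_continuous. Qed.

Lemma cont_bil (R : realType) n (P : 'M[R]_n) : continuous (fun v => bil P v v).
Proof.
have -> : (fun v => bil P v v) = fun v => \sum_j (\sum_i v 0 i * P i j) * v 0 j.
  apply: funext => v; rewrite /bil mxE; apply: eq_bigr => j _.
  by rewrite !mxE; congr (_ * _); apply: eq_bigr => i _; rewrite mxE.
apply: cont_sum => j; apply: cont_mul; last exact: cont_coord.
apply: cont_sum => i; apply: cont_mul; first exact: cont_coord.
by move=> x; apply: cst_continuous.
Qed.

Lemma cont_dt (R : realType) n : continuous (fun v : 'rV[R]_n => dt v v).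
Proof.
have -> : (fun v : 'rV[R]_n => dt v v) = fun v => \sum_i v 0 i * v 0 i.
  by apply: funext => v; rewrite dtE.
by apply: cont_sum => i; apply: cont_mul; exact: cont_coord.
Qed.
Lemma dt_coord_le1 (R : realType) n (v : 'rV[R]_n) i : dt v v = 1 -> `|v 0 i| <= 1.
Proof.
move=> h; have : v 0 i ^+ 2 <= 1.
  rewrite -h dtE (bigD1 i) //= -expr2 lerDl sumr_ge0 // => j _.
  by rewrite -expr2 sqr_ge0.
rewrite -real_normK ?num_real // => h2.
have := normr_ge0 (v 0 i); move: h2; set y := `|v 0 i|; nra.
Qed.

Lemma sphere_max (R : realType) n (P : 'M[R]_n.+1) :
  exists2 v, dt v v = 1 & forall w, dt w w = 1 -> bil P w w <= bil P v v.
Proof.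
pose A := [set v : 'rV[R]_n.+1 | dt v v = 1].
have A0 : A !=set0.
  exists (delta_mx 0 0); rewrite /A /= dtE (bigD1 ord0) //= big1 ?addr0.
    by rewrite !mxE eqxx mulr1.
  by move=> j /negbTE hj; rewrite !mxE hj mulr0.
have cA : compact A.
  apply: bounded_closed_compact.
    exists 1; split; first by rewrite num_real.
    move=> M M1 v /= Av; rewrite [X in X <= _]/Num.norm /= mx_normrE; apply: bigmax_le.
      by rewrite ltW // (lt_trans _ M1).
    move=> ij _; rewrite (le_trans _ (ltW M1)) //.
    by case: ij => i j /=; rewrite (ord1 i); exact: dt_coord_le1.
  have -> : A = (fun v => dt v v) @^-1` [set x | x = 1] by [].
  apply: preimage_closed; last exact: closed_eq.
  by move=> x _; apply: cont_dt.
have [v Av vmax] := EVT_max_rV A0 cA (continuous_subspaceT (@cont_bil R _ P)).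
exists v; first by move: Av; rewrite inE.
by move=> w Aw; apply: vmax; rewrite inE.
Qed.
Lemma bil_exp (R : realType) n (P : 'M[R]_n) v u t : P^T = P ->
  bil P (v + t *: u) (v + t *: u) = bil P v v + 2 * t * bil P v u + t ^+ 2 * bil P u u.
Proof.
move=> sP; rewrite !bilDl !bilDr !bilZl !bilZr (bilC u v sP); ring.
Qed.
Lemma dt_exp (R : realType) n (v u : 'rV[R]_n) t :
  dt (v + t *: u) (v + t *: u) = dt v v + 2 * t * dt v u + t ^+ 2 * dt u u.
Proof. rewrite !dtDl !dtDr !dtZl !dtZr (dtC u v); ring. Qed.
Lemma bil0 (R : realType) n (P : 'M[R]_n) : bil P 0 0 = 0.
Proof. by rewrite -(scale0r 0) bilZl mul0r. Qed.

Lemma sym_top (R : realType) n (P : 'M[R]_n.+1) : P^T = P ->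
  exists lam, eigenvalue P lam /\ (forall w, bil P w w <= lam * dt w w).
Proof.
move=> sP; have [v dv vmax] := sphere_max P.
set lam := bil P v v.
have hom : forall w, bil P w w <= lam * dt w w.
  move=> w; have [w0|wn0] := eqVneq (dt w w) 0.
    by rewrite (dt_eq0 w0) bil0 dtE big1 ?mulr0 // => i _; rewrite mxE mul0r.
  have wpos : 0 < dt w w by rewrite lt_def wn0 dt_ge0.
  set c := Num.sqrt (dt w w).
  have cpos : 0 < c by rewrite sqrtr_gt0.
  have c2 : c ^+ 2 = dt w w by rewrite sqr_sqrtr // ltW.
  have := vmax (c^-1 *: w); rewrite bilZl bilZr dtZl dtZr.
  have -> : c^-1 * (c^-1 * dt w w) = 1.
    by rewrite -c2 mulrA -expr2 exprVn mulVf // expf_neq0 // gt_eqF.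
  move=> /(_ erefl) h.
  have : bil P w w = c ^+ 2 * (c^-1 * (c^-1 * bil P w w)).
    by rewrite mulrA -expr2 mulrA -exprMn mulfV ?gt_eqF // expr1n mul1r.
  move=> ->; rewrite -c2 mulrC ler_wpM2r // ?sqr_ge0 //.
set u := v *m P - lam *: v.
have vP : v *m P = u + lam *: v by rewrite /u subrK.
have u0 : u = 0.
  apply: dt_eq0; apply/eqP; rewrite eq_le dt_ge0 andbT; rewrite leNgt; apply/negP => upos.
  set duu := dt u u; set q := lam * duu - bil P u u.
  have q0 : 0 <= q by rewrite subr_ge0 hom.
  have bvu : bil P v u = duu + lam * dt v u by rewrite bil_row vP dtDl dtZl.
  set t := duu / (q + 1).
  have tq : t * (q + 1) = duu by rewrite /t mulfVK // gt_eqF // ltr_wpDl.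
  have tpos : 0 < t by rewrite /t divr_gt0 // ltr_wpDl.
  have := hom (v + t *: u); rewrite bil_exp // dt_exp dv bvu -/lam.
  rewrite -/duu; move: q0 tq tpos upos; rewrite /q; nra.
exists lam; split=> //; apply/eigenvalueP; exists v.
  by move: vP; rewrite u0 add0r.
by apply/negP => /eqP v0; move: dv; rewrite v0 -(scale0r 0) dtZl mul0r => /eqP; rewrite eq_sym oner_eq0.
Qed.
Lemma qform_bil (R : realType) n (P : 'M[R]_n) x : qform P x = bil P x^T x^T.
Proof. by rewrite /qform /bil trmxK. Qed.
Lemma vnorm2 (R : realType) n (x : 'cV[R]_n) : vnorm x ^+ 2 = dt x^T x^T.
Proof.
rewrite /vnorm sqr_sqrtr; last by apply: sumr_ge0 => i _; rewrite sqr_ge0.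
by rewrite dtE; apply: eq_bigr => i _; rewrite !mxE expr2.
Qed.

Lemma eig_le (R : realType) n (P : 'M[R]_n) lam a : eigenvalue P a ->
  (forall w, bil P w w <= lam * dt w w) -> a <= lam.
Proof.
move=> /eigenvalueP [w wP wn0] hom.
have wpos : 0 < dt w w.
  by rewrite lt_def dt_ge0 andbT; apply/eqP => /dt_eq0 w0; move: wn0; rewrite w0 eqxx.
by have := hom w; rewrite bil_row wP dtZl ler_pM2r.
Qed.

Lemma lmax_eq (R : realType) n (P : 'M[R]_n.+1) : P^T = P ->
  (forall w, bil P w w <= lambda_max P * dt w w).
Proof.
move=> sP; have [lam [el hom]] := sym_top sP.
suff -> : lambda_max P = lam by [].
apply/eqP; rewrite eq_le; apply/andP; split.
  by apply: ge_sup; [by exists lam | move=> a /= ea; exact: eig_le ea hom].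
have hub : has_ubound [set a | eigenvalue P a] by exists lam => a /= ea; exact: eig_le ea hom.
exact: (ub_le_sup hub el).
Qed.

Lemma eigN (R : realType) n (P : 'M[R]_n) b : eigenvalue (- P) b = eigenvalue P (- b).
Proof.
apply/eigenvalueP/eigenvalueP => -[w wP wn0]; exists w => //.
  by rewrite scaleNr -wP mulmxN opprK.
by rewrite mulmxN wP scaleNr opprK.
Qed.

Lemma lmin_eq (R : realType) n (P : 'M[R]_n) : lambda_min P = - lambda_max (- P).
Proof.
rewrite /lambda_min /inf /lambda_max; congr (- sup _).
apply/seteqP; split => b /=.
  by move=> [a ea <-]; rewrite eigN opprK.
by move=> eb; exists (- b); rewrite -?eigN ?opprK.
Qed.

Lemma bilN (R : realType) n (P : 'M[R]_n) a b : bil (- P) a b = - bil P a b.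
Proof. by rewrite /bil mulmxN mulNmx mxE. Qed.

Lemma qform_le_max (R : realType) n (P : 'M[R]_n.+1) : P^T = P ->
  forall x, qform P x <= lambda_max P * vnorm x ^+ 2.
Proof. by move=> sP x; rewrite qform_bil vnorm2; exact: lmax_eq. Qed.

Lemma qform_ge_min (R : realType) n (P : 'M[R]_n.+1) : spd P ->
  0 < lambda_min P /\ forall x, lambda_min P * vnorm x ^+ 2 <= qform P x.
Proof.
move=> [sP pd]; have sN : (- P)^T = - P by rewrite linearN /= sP.
have [lam [el hom]] := sym_top sN.
have -> : lambda_min P = - lam.
  rewrite lmin_eq; congr (- _); apply/eqP; rewrite eq_le; apply/andP; split.
    by apply: ge_sup; [by exists lam | move=> a /= ea; exact: eig_le ea hom].
  have hub : has_ubound [set a | eigenvalue (- P) a] by exists lam => a /= ea; exact: eig_le ea hom.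
  exact: (ub_le_sup hub el).
split.
  move: el; rewrite eigN => /eigenvalueP [w wP wn0].
  have := pd w^T; rewrite qform_bil trmxK bil_row wP dtZl.
  have wpos : 0 < dt w w.
    by rewrite lt_def dt_ge0 andbT; apply/eqP => /dt_eq0 w0; move: wn0; rewrite w0 eqxx.
  rewrite pmulr_lgt0 //; apply.
  apply/eqP => /(congr1 trmx); rewrite trmxK linear0 => w0; by rewrite w0 eqxx in wn0.
move=> x; rewrite qform_bil vnorm2; have := hom x^T; rewrite bilN; lra.
Qed.
Lemma CS (R : realType) n (u v : 'rV[R]_n) : dt u v ^+ 2 <= dt u u * dt v v.
Proof.
have [v0|vn0] := eqVneq (dt v v) 0.
  have d0 : forall w : 'rV[R]_n, dt w 0 = 0 by move=> w; rewrite -(scale0r 0) dtZr mul0r.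
  by rewrite (dt_eq0 v0) !d0 expr0n mulr0.
have vpos : 0 < dt v v by rewrite lt_def vn0 dt_ge0.
set t := dt u v / dt v v.
have tv : t * dt v v = dt u v by rewrite /t mulfVK.
have := dt_ge0 (u + (- t) *: v); rewrite dt_exp -tv.
move: vpos; set a := dt v v; set b := dt u u; nra.
Qed.

Lemma vnormE (R : realType) n (x : 'cV[R]_n) : vnorm x = Num.sqrt (dt x^T x^T).
Proof. by rewrite /vnorm dtE; congr Num.sqrt; apply: eq_bigr => i _; rewrite !mxE expr2. Qed.

Lemma vnorm_ge0 (R : realType) n (x : 'cV[R]_n) : 0 <= vnorm x.
Proof. exact: sqrtr_ge0. Qed.

Lemma vnorm_sq_le (R : realType) n (x y : 'cV[R]_n) :
  vnorm x ^+ 2 <= vnorm y ^+ 2 -> vnorm x <= vnorm y.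
Proof.
move=> h; have := vnorm_ge0 x; have := vnorm_ge0 y; move: h.
set a := vnorm x; set b := vnorm y; nra.
Qed.

Lemma vnorm_le (R : realType) n (x : 'cV[R]_n) c :
  0 <= c -> vnorm x ^+ 2 <= c ^+ 2 -> vnorm x <= c.
Proof.
move=> c0 h; have := vnorm_ge0 x; move: h; set a := vnorm x; nra.
Qed.

Lemma vnormD (R : realType) n (x y : 'cV[R]_n) : vnorm (x + y) <= vnorm x + vnorm y.
Proof.
apply: vnorm_le; first by rewrite addr_ge0 // vnorm_ge0.
rewrite !vnorm2 linearD /= !dtDl !dtDr (dtC y^T x^T).
have := CS x^T y^T; have := vnorm_ge0 x; have := vnorm_ge0 y.
rewrite -!vnorm2; set a := vnorm x; set b := vnorm y; set c := dt x^T y^T.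
move=> b0 a0 h; have : c <= a * b.
  have ab0 : 0 <= a * b by rewrite mulr_ge0.
  move: h; rewrite -exprMn => h; nra.
nra.
Qed.

Lemma vnormZ (R : realType) n (x : 'cV[R]_n) c : vnorm (c *: x) = `|c| * vnorm x.
Proof.
rewrite !vnormE linearZ /= dtZl dtZr mulrA -expr2 sqrtrM ?sqr_ge0 //.
by rewrite sqrtr_sqr.
Qed.

Lemma vnorm0 (R : realType) n : vnorm (0 : 'cV[R]_n) = 0.
Proof. by rewrite /vnorm big1 ?sqrtr0 // => i _; rewrite mxE expr0n. Qed.

Lemma vnorm_eq0 (R : realType) n (x : 'cV[R]_n) : vnorm x = 0 -> x = 0.
Proof.
move=> h; have : dt x^T x^T = 0 by rewrite -vnorm2 h expr0n.
by move=> /dt_eq0 /(congr1 trmx); rewrite trmxK linear0.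
Qed.

Lemma opnorm_bound (R : realType) n m (B : 'M[R]_(n, m)) v :
  vnorm (B *m v) <= opnorm B * vnorm v.
Proof.
have [v0|vn0] := eqVneq (vnorm v) 0.
  by move: v0 => /vnorm_eq0 ->; rewrite mulmx0 !vnorm0 mulr0.
have vpos : 0 < vnorm v by rewrite lt_def vn0 vnorm_ge0.
set K := \sum_i dt (row i B) (row i B).
have hub : has_ubound [set vnorm (B *m v) | v in [set v : 'cV[R]_m | vnorm v <= 1]].
  exists (Num.sqrt K) => _ [w /= w1 <-].
  apply: vnorm_le; first exact: sqrtr_ge0.
  rewrite vnorm2 [X in _ <= X]sqr_sqrtr; last by apply: sumr_ge0 => i _; exact: dt_ge0.
  rewrite dtE; apply: ler_sum => i _.
  have -> : (B *m w)^T 0 i * (B *m w)^T 0 i = dt (row i B) w^T ^+ 2.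
    rewrite !mxE expr2 dtE; congr (_ * _); apply: eq_bigr => j _; rewrite !mxE //.
  apply: (le_trans (CS _ _)); rewrite -vnorm2.
  have : vnorm w ^+ 2 <= 1 by move: w1 (vnorm_ge0 w); set a := vnorm w; nra.
  by move=> h; rewrite -[X in _ <= X]mulr1 ler_wpM2l // dt_ge0.
have : vnorm (B *m ((vnorm v)^-1 *: v)) <= opnorm B.
  apply: (ub_le_sup hub); exists ((vnorm v)^-1 *: v) => //.
  by rewrite /= vnormZ ger0_norm ?invr_ge0 ?vnorm_ge0 // mulVf.
rewrite -scalemxAr vnormZ ger0_norm ?invr_ge0 ?vnorm_ge0 //.
by rewrite mulrC -ler_pdivlMr ?invr_gt0 // invrK.
Qed.
Lemma sqrt_qform (R : realType) n (S P : 'M[R]_n) y :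
  is_spd_sqrt S P -> vnorm (S *m y) ^+ 2 = qform P y.
Proof.
move=> [[sS _] SS]; rewrite vnorm2 /dt trmxK /qform trmx_mul sS -SS.
by rewrite !mulmxA.
Qed.

Lemma qformZ (R : realType) n (P : 'M[R]_n) c x : qform (c *: P) x = c * qform P x.
Proof. by rewrite /qform -scalemxAr -scalemxAl mxE. Qed.

Lemma le_sqrt_bound (R : realType) n (x y : 'cV[R]_n) c :
  0 <= c -> vnorm x ^+ 2 <= c * vnorm y ^+ 2 -> vnorm x <= Num.sqrt c * vnorm y.
Proof.
move=> c0 h; apply: vnorm_le; first by apply: mulr_ge0; [exact: sqrtr_ge0|exact: vnorm_ge0].
by rewrite exprMn (sqr_sqrtr c0).
Qed.

Lemma sq_le (R : realType) (a b : R) : 0 <= b -> a ^+ 2 <= b ^+ 2 -> a <= b.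
Proof. move=> b0 h; rewrite leNgt; apply/negP => ab; move: h; nra. Qed.
Lemma scal (R : realType) (T : nat) (alpha mu : R) : (1 <= T)%N -> 0 < alpha -> alpha < 1 ->
  1 <= mu -> - ln mu / ln alpha < T%:R ->
  [/\ 1 <= powR mu T%:R^-1, powR mu T%:R^-1 ^+ T = mu & alpha * powR mu T%:R^-1 < 1].
Proof.
move=> T1 a0 a1 mu1 hln.
have Tpos : 0 < T%:R :> R by rewrite ltr0n.
have mu0 : 0 < mu by rewrite (lt_le_trans ltr01).
split.
- rewrite /powR gt_eqF //; apply: (le_trans _ (expR_ge1Dx _)); rewrite lerDl; apply: mulr_ge0; [by rewrite invr_ge0 ltW | exact: ln_ge0].
- by rewrite -powR_mulrn ?powR_ge0 // -powRrM mulVf ?gt_eqF // powRr1 // ltW.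
- rewrite /powR gt_eqF // -[X in X * _](lnK a0) -expRD -[X in _ < X]expR0 ltr_expR.
  have la : ln alpha < 0 by apply: ln_lt0; rewrite a0 a1.
  have lm : 0 <= ln mu by apply: ln_ge0.
  move: hln; set z := - ln mu / ln alpha => hz.
  have zl : z * ln alpha = - ln mu by rewrite /z mulfVK // lt_eqF.
  have tt : T%:R^-1 * T%:R = 1 :> R by rewrite mulVf // gt_eqF.
  move: tt Tpos; set t := T%:R; set u := t^-1 => tt tpos.
  have u0 : 0 < u by rewrite invr_gt0.
  have h1 : t * ln alpha + ln mu < 0 by nra.
  have -> : ln alpha + u * ln mu = u * (t * ln alpha + ln mu).
    by rewrite mulrDr mulrA tt mul1r.
  by rewrite pmulr_rlt0.
Qed.

Fixpoint Fs (R : realType) (r c w0 : R) (k : nat) : R :=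
  if k is k'.+1 then r * Fs r c w0 k' + c else w0.

Lemma Fs_bound (R : realType) (r c w0 : R) k : 0 <= r -> r < 1 -> 0 <= c ->
  Fs r c w0 k <= r ^+ k * w0 + c / (1 - r).
Proof.
move=> r0 r1 c0; elim: k => [|k IH] /=; first by rewrite expr0 mul1r lerDl divr_ge0 // subr_ge0 ltW.
have e : r * (c / (1 - r)) + c = c / (1 - r).
  by field; rewrite subr_eq0 eq_sym lt_eqF.
rewrite -[X in _ <= _ + X]e exprS -mulrA addrA -mulrDr lerD2r.
by rewrite ler_wpM2l.
Qed.
Unset Implicit Arguments.
Theorem theorem2 (R : realType) (n m : nat) (T LD : nat)
  (alpha mu Bbar epsbar : R)
  (Pmin Pmax : 'M[R]_n) (P Psq : nat -> 'M[R]_n)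
  (eta g : nat -> 'cV[R]_n) (B : nat -> 'M[R]_(n, m)) (eps : nat -> 'cV[R]_m) :
  (1 <= n)%N -> (1 <= m)%N -> (1 <= T)%N -> (1 <= LD)%N -> (LD <= T)%N ->
  0 < alpha < 1 -> 1 <= mu -> 0 <= Bbar -> 0 <= epsbar ->
  - ln mu / ln alpha < T%:R ->
  spd Pmin -> spd Pmax ->
  (forall i, spd (P i)) ->
  (forall i, loewner_le Pmin (P i) /\ loewner_le (P i) Pmax) ->
  (forall i, loewner_le (P i.+1) (mu *: P i)) ->
  (forall i, is_spd_sqrt (Psq i) (P i)) ->
  (forall k, eta k.+1 = g k + B k *m eps k) ->
  (forall k, opnorm (B k) <= Bbar) ->
  (forall i k, (i * T <= k < i * T + T)%N -> ~~ (i.+1 * T - LD <= k)%N ->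
     eps k = 0) ->
  (forall i k, (i.+1 * T - LD <= k < i.+1 * T)%N -> vnorm (eps k) <= epsbar) ->
  (forall i k, (i * T <= k < i * T + T)%N ->
     vnorm (Psq i *m g k) <= Num.sqrt alpha * vnorm (Psq i *m eta k)) ->
  let ahat := alpha * powR mu (T%:R^-1) in
  let pmin := lambda_min Pmin in
  let pmax := lambda_max Pmax in
  forall k : nat,
    vnorm (eta k) <=
      Num.sqrt (pmax / pmin) * powR ahat (k%:R / 2) * vnorm (eta 0%N)
    + Num.sqrt (pmax / pmin) * (powR (ahat / alpha) (T%:R / 2)
        / (1 - Num.sqrt ahat)) * Bbar * epsbar.
Proof.
case: n Pmin Pmax P Psq eta g B => [|n] Pmin Pmax P Psq eta g B; first by [].
move=> hn hm hT hLD hLDT /andP[a0 a1] mu1 B0 e0 hln spdmin spdmax spdP hP hmu hsq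
  heta hB heps0 heps hg ahat pmin pmax kk.
have [pmin_pos pmin_le] := qform_ge_min spdmin.
have pmax_le := qform_le_max spdmax.1.
have e1n0 : (delta_mx 0 0 : 'cV[R]_n.+1) != 0.
  apply/eqP => /matrixP /(_ 0 0); rewrite !mxE eqxx /= => /eqP; by rewrite oner_eq0.
have pmax_pos : 0 < pmax.
  have := spdmax.2 _ e1n0; have := pmax_le (delta_mx 0 0).
  have := vnorm_ge0 (delta_mx 0 0 : 'cV[R]_n.+1).
  rewrite -/pmax; set a := vnorm _; set b := qform _ _ => ha hb hc; nra.
have [rho1 rhoT arho] := scal hT a0 a1 mu1 hln.
set rho := powR mu T%:R^-1 in rho1 rhoT arho.
have ahatE : ahat = alpha * rho by [].
have rho0 : 0 <= rho by rewrite (le_trans ler01).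
set s := Num.sqrt alpha.
set sg := Num.sqrt rho.
set r := Num.sqrt ahat.
set mm := Num.sqrt mu.
have s0 : 0 <= s by exact: sqrtr_ge0.
have sg1 : 1 <= sg.
  apply: sq_le; first exact: sqrtr_ge0.
  by rewrite expr1n sqr_sqrtr.
have rE : r = s * sg by rewrite /r ahatE sqrtrM // ltW.
have r0 : 0 <= r by exact: sqrtr_ge0.
have r1 : r < 1.
  have : r ^+ 2 < 1 by rewrite /r sqr_sqrtr ahatE // mulr_ge0 // ltW.
  move: r0; nra.
have mmE : mm = sg ^+ T.
  rewrite /mm -rhoT -(sqr_sqrtr rho0) -exprM mulnC exprM sqrtr_sqr ger0_norm //.
have cmax : forall i y, vnorm (Psq i *m y) <= Num.sqrt pmax * vnorm y.
  move=> i y; apply: le_sqrt_bound; first exact: ltW.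
  rewrite (sqrt_qform _ (hsq i)); apply: le_trans (pmax_le y).
  exact: (hP i).2.
have cmin : forall i y, Num.sqrt pmin * vnorm y <= vnorm (Psq i *m y).
  move=> i y; apply: sq_le; first exact: vnorm_ge0.
  rewrite (sqrt_qform _ (hsq i)) exprMn (sqr_sqrtr (ltW pmin_pos)).
  apply: (le_trans (pmin_le y)); exact: (hP i).1.
have shift : forall i y, vnorm (Psq i.+1 *m y) <= mm * vnorm (Psq i *m y).
  move=> i y; apply: le_sqrt_bound; first by rewrite (le_trans ler01).
  rewrite (sqrt_qform _ (hsq i.+1)) (sqrt_qform _ (hsq i)) -qformZ; exact: hmu.
set D := Num.sqrt pmax * (Bbar * epsbar).
have D0 : 0 <= D by rewrite mulr_ge0 ?sqrtr_ge0 ?mulr_ge0.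
have epsb : forall i k0, (i * T <= k0 < i * T + T)%N -> vnorm (eps k0) <= epsbar.
  move=> i k hk; case hc : (i.+1 * T - LD <= k)%N.
    by apply: (heps i); rewrite hc /= mulSnr; case/andP: hk.
  by rewrite (heps0 i k hk) ?hc // vnorm0.
have step : forall i k, (i * T <= k < i * T + T)%N ->
    vnorm (Psq i *m eta k.+1) <= s * vnorm (Psq i *m eta k) + D.
  move=> i k hk; rewrite heta mulmxDr; apply: le_trans (vnormD _ _) _.
  apply: lerD; first exact: hg.
  apply: le_trans (cmax _ _) _; apply: ler_wpM2l; first exact: sqrtr_ge0.
  apply: le_trans (opnorm_bound _ _) _.
  apply: le_trans (_ : Bbar * vnorm (eps k) <= _).
    by apply: ler_wpM2r; [exact: vnorm_ge0 | exact: hB].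
  by apply: ler_wpM2l => //; exact: epsb hk.
set w0 := vnorm (Psq 0%N *m eta 0%N).
set c := mm * D.
have sgp : forall j, 0 <= sg ^+ j by move=> j; rewrite exprn_ge0 // (le_trans ler01).
have inv : forall k i j, (j < T)%N -> k = (i * T + j)%N ->
    sg ^+ j * vnorm (Psq i *m eta k) <= Fs r c w0 k.
  elim=> [|k IH] i j jT ek.
  - move: ek => /esym/eqP; rewrite addn_eq0 muln_eq0 => /andP[/orP[/eqP -> | /eqP T0] /eqP ->].
      by rewrite expr0 mul1r.
    by rewrite T0 in hT.
  - case: j jT ek => [|j] jT ek.
    + case: i ek => [|i] ek; first by move: ek; rewrite mul0n.
      have ekk : k = (i * T + T.-1)%N.
        by move: ek; rewrite mulSnr addn0 -[X in (_ + X)%N](prednK hT) addnS => -[].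
      have h := IH i T.-1 (ltac:(by rewrite ltn_predL)) ekk.
      have hs := step i k (ltac:(by rewrite ekk leq_addr /= ltn_add2l ltn_predL)).
      have hsh := shift i (eta k.+1).
      rewrite expr0 mul1r /=.
      have mmE' : mm = sg * sg ^+ T.-1 by rewrite mmE -exprS prednK.
      apply: le_trans hsh _.
      apply: le_trans (_ : mm * (s * vnorm (Psq i *m eta k) + D) <= _).
        by apply: ler_wpM2l; [rewrite mmE; exact: sgp | exact: hs].
      have -> : mm * (s * vnorm (Psq i *m eta k) + D) =
          r * (sg ^+ T.-1 * vnorm (Psq i *m eta k)) + c.
        by rewrite /c rE mmE'; ring.
      by rewrite lerD2r ler_wpM2l.
    + have ekk : k = (i * T + j)%N by move: ek; rewrite addnS => -[].
      have h := IH i j (ltnW jT) ekk.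
      have hs := step i k (ltac:(by rewrite ekk leq_addr /= ltn_add2l ltnW)).
      rewrite /=.
      apply: le_trans (_ : sg ^+ j.+1 * (s * vnorm (Psq i *m eta k) + D) <= _).
        by apply: ler_wpM2l; [exact: sgp | exact: hs].
      rewrite mulrDr; apply: lerD.
        rewrite exprS (_ : sg * sg ^+ j * (s * vnorm (Psq i *m eta k)) = r * (sg ^+ j * vnorm (Psq i *m eta k))); last by rewrite rE; ring.
        by rewrite ler_wpM2l.
      by rewrite /c mmE; apply: ler_wpM2r; [exact: D0 | exact: (ler_weXn2l sg1 (ltnW jT))].
have [i [j [jT ekk]]] : exists i j, (j < T)%N /\ kk = (i * T + j)%N.
  by exists (kk %/ T)%N, (kk %% T)%N; rewrite ltn_pmod // {1}(divn_eq kk T).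
have c0 : 0 <= c by rewrite /c mulr_ge0 // mmE sgp.
have H1 := inv kk i j jT ekk.
have H2 := Fs_bound w0 kk r0 r1 c0.
have H3 := cmin i (eta kk).
have H4 : w0 <= Num.sqrt pmax * vnorm (eta 0%N) := cmax 0%N (eta 0%N).
have H5 : vnorm (Psq i *m eta kk) <= sg ^+ j * vnorm (Psq i *m eta kk).
  by rewrite ler_peMl ?vnorm_ge0 // exprn_ege1.
have ahat0 : 0 <= ahat by rewrite ahatE mulr_ge0 // ltW.
have E1 : powR ahat (kk%:R / 2) = r ^+ kk.
  by rewrite (mulrC kk%:R) powRrM powR12_sqrt // powR_mulrn // sqrtr_ge0.
have E2 : powR (ahat / alpha) (T%:R / 2) = mm.
  rewrite ahatE (mulrC alpha rho) mulfK ?gt_eqF // (mulrC T%:R) powRrM powR12_sqrt // powR_mulrn ?sqrtr_ge0 //.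
have E3 : Num.sqrt (pmax / pmin) = Num.sqrt pmax / Num.sqrt pmin.
  by rewrite sqrtrM ?ltW // sqrtrV // ltW.
rewrite E1 E2 E3.
have apos : 0 < Num.sqrt pmin by rewrite sqrtr_gt0.
have r1' : 1 - r != 0 by rewrite subr_eq0 eq_sym lt_eqF.
rewrite -(ler_pM2l apos).
have -> : Num.sqrt pmin * (Num.sqrt pmax / Num.sqrt pmin * r ^+ kk * vnorm (eta 0%N) +
    Num.sqrt pmax / Num.sqrt pmin * (mm / (1 - r)) * Bbar * epsbar) =
    r ^+ kk * (Num.sqrt pmax * vnorm (eta 0%N)) + c / (1 - r).
  rewrite /c /D; field; rewrite r1' gt_eqF //.
apply: le_trans H3 _; apply: le_trans H5 _; apply: le_trans H1 _; apply: le_trans H2 _.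
by rewrite lerD2r ler_wpM2l // exprn_ge0.
Qed.
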